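(* $$\sum _{n=0}^{\infty } \frac{\binom{2 n}{n}^2 H_{2 n}}{16^n(2 n - 1)} = \frac{6 \ln (2)-2}{\pi }.$$
   Context: $H_k = \sum_{j=1}^k \frac1j$ is the $k$-th harmonic number, with $H_0 = 0$. *)

(* Defs.v *)
From Stdlib Require Import Reals.
From Coquelicot Require Import Coquelicot.
Open Scope R_scope.

Fixpoint harmonic (k : nat) : R :=
  match k with
  | O => 0
  | S k' => harmonic k' + / INR (S k')
  end.

(* Main.v *)
Require Import Defs.
From Stdlib Require Import Reals.
From Coquelicot Require Import Coquelicot.
Open Scope R_scope.
From Stdlib Require Import Lra Lia Psatz.


Definition aa (n : nat) : R := Binomial.C (2 * n) n / 4 ^ n.
Definition hh (n : nat) : R := aa n * harmonic (2 * n).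

Lemma aa_0 : aa 0 = 1.
Proof. unfold aa, Binomial.C. simpl. field. Qed.

Lemma aa_S n : aa (S n) = aa n * (2 * INR n + 1) / (2 * INR n + 2).
Proof.
  unfold aa, Binomial.C.
  replace (2 * S n - S n)%nat with (S n) by lia.
  replace (2 * n - n)%nat with n by lia.
  replace (2 * S n)%nat with (S (S (2 * n))) by lia.
  rewrite !fact_simpl. rewrite !mult_INR, !S_INR, mult_INR. simpl pow.
  assert (H1 := INR_fact_neq_0 n). assert (H2 := INR_fact_neq_0 (2*n)).
  assert (H3 : 0 <= INR n) by apply pos_INR.
  assert (H4 : 0 < 4 ^ n) by (apply pow_lt; lra).
  simpl INR. field. repeat split; try lra.
Qed.

Lemma aa_pos n : 0 < aa n.
Proof.
  induction n. rewrite aa_0; lra.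
  rewrite aa_S. assert (0 <= INR n) by apply pos_INR.
  apply Rmult_lt_0_compat. apply Rmult_lt_0_compat; lra. apply Rinv_0_lt_compat; lra.
Qed.

Lemma aa_le1 n : aa n <= 1.
Proof.
  induction n. rewrite aa_0; lra.
  rewrite aa_S. assert (0 <= INR n) by apply pos_INR. assert (Hp := aa_pos n).
  apply Rmult_le_reg_r with (2 * INR n + 2). lra.
  field_simplify; nra.
Qed.

Lemma harmonic_S2 n : harmonic (2 * S n) = harmonic (2 * n) + / (2 * INR n + 1) + / (2 * INR n + 2).
Proof.
  replace (2 * S n)%nat with (S (S (2 * n))) by lia.
  set (m := (2 * n)%nat).
  change (harmonic (S (S m))) with (harmonic (S m) + / INR (S (S m))).
  change (harmonic (S m)) with (harmonic m + / INR (S m)).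
  rewrite !S_INR. unfold m. rewrite mult_INR. simpl INR.
  replace (1 + 1) with 2 by ring. replace (2 * INR n + 1 + 1) with (2 * INR n + 2) by ring. reflexivity.
Qed.

Lemma harmonic_bounds k : 0 <= harmonic k <= INR k.
Proof.
  induction k. simpl; lra.
  change (harmonic (S k)) with (harmonic k + / INR (S k)).
  rewrite S_INR. assert (0 <= INR k) by apply pos_INR.
  assert (0 < / (INR k + 1) <= 1).
  { split. apply Rinv_0_lt_compat; lra. rewrite <- Rinv_1. apply Rinv_le_contravar; lra. }
  lra.
Qed.

Lemma hh_rec n : (2 * INR n + 2) * hh (S n) = (2 * INR n + 1) * hh n + aa n + aa (S n).
Proof.
  unfold hh. rewrite harmonic_S2, aa_S. assert (0 <= INR n) by apply pos_INR.
  field. lra.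
Qed.

Lemma hh_0 : hh 0 = 0.
Proof. unfold hh. simpl. ring. Qed.

Lemma hh_bounds n : 0 <= hh n <= 2 * INR n.
Proof.
  unfold hh. assert (H := harmonic_bounds (2 * n)). rewrite mult_INR in H. simpl INR in H.
  assert (H1 := aa_pos n). assert (H2 := aa_le1 n). split. nra. nra.
Qed.

Lemma pow_le_one x n : 0 <= x <= 1 -> x ^ n <= 1.
Proof. intros H. induction n. simpl; lra. simpl. assert (0 <= x ^ n) by (apply pow_le; lra). nra. Qed.

Lemma geom_lin_bound r : 0 <= r < 1 -> forall n, INR (S n) * r ^ n <= / (1 - r).
Proof.
  intros Hr.
  assert (K : forall n, INR (S n) * r ^ n * (1 - r) <= 1 - r ^ (S n)).
  { induction n. simpl. lra.
    rewrite S_INR. assert (0 <= r ^ S n <= 1). { split. apply pow_le; lra. apply pow_le_one; lra. }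
    simpl pow in *. rewrite S_INR in IHn.
    assert (0 <= INR n) by apply pos_INR.
    set (p := r ^ n) in *. set (q := INR n) in *.
    assert (E1 : r * ((q + 1) * p * (1 - r)) <= r * (1 - r * p)) by (apply Rmult_le_compat_l; lra).
    assert (E2 : 0 <= (1 - r) * (1 - r * p)) by (apply Rmult_le_pos; lra).
    rewrite S_INR; fold q. nra. }
  intros n. specialize (K n). assert (0 <= r ^ S n) by (apply pow_le; lra).
  apply Rmult_le_reg_r with (1 - r). lra. rewrite Rinv_l by lra. lra.
Qed.


Lemma is_derive_eq (f : R -> R) (x l l2 : R) : is_derive f x l -> l = l2 -> is_derive f x l2.
Proof. intros H ->. exact H. Qed.

Lemma Rminus_eqR (a b : R) : minus a b = a - b.
Proof. reflexivity. Qed.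
Lemma Rplus_eqR (a b : R) : plus a b = a + b.
Proof. reflexivity. Qed.
Lemma Rscal_eqR (a b : R) : scal a b = a * b.
Proof. reflexivity. Qed.
Lemma Rmult_eqR (a b : R) : mult a b = a * b.
Proof. reflexivity. Qed.

Definition W (k : nat) : R := RInt (fun t => sin t ^ k) 0 (PI / 2).
Definition J (m : nat) : R := RInt (fun t => sin t ^ (2 * m) * cos t ^ 2) 0 (PI / 2).

Lemma deriv_g k x : is_derive (fun t => sin t ^ S k * cos t) x
   (INR (S k) * (sin x ^ k * cos x ^ 2) - sin x ^ (k + 2)).
Proof.
  eapply is_derive_eq.
  apply (is_derive_mult (fun t => sin t ^ S k) cos x _ _
     (is_derive_pow sin (S k) x _ (is_derive_sin x)) (is_derive_cos x) Rmult_comm).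
  unfold mult, plus; simpl pred. rewrite pow_add. simpl. ring.
Qed.

Lemma cont_sinpow k x : continuous (fun t => sin t ^ k) x.
Proof. apply (@ex_derive_continuous R_AbsRing R_NormedModule). auto_derive. auto. Qed.

Lemma cont_sinpowcos2 k x : continuous (fun t => sin t ^ k * cos t ^ 2) x.
Proof. apply (@ex_derive_continuous R_AbsRing R_NormedModule). auto_derive. auto. Qed.

Lemma ex_W k : ex_RInt (fun t => sin t ^ k) 0 (PI / 2).
Proof. apply (@ex_RInt_continuous R_CompleteNormedModule). intros; apply cont_sinpow. Qed.

Lemma ex_J k : ex_RInt (fun t => sin t ^ k * cos t ^ 2) 0 (PI / 2).
Proof. apply (@ex_RInt_continuous R_CompleteNormedModule). intros; apply cont_sinpowcos2. Qed.

Lemma J_rel m : INR (S (2 * m)) * J m = W (2 * m + 2).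
Proof.
  assert (H : is_RInt (fun t => INR (S (2 * m)) * (sin t ^ (2 * m) * cos t ^ 2) - sin t ^ (2 * m + 2)) 0 (PI/2)
       (minus (sin (PI/2) ^ S (2 * m) * cos (PI/2)) (sin 0 ^ S (2 * m) * cos 0))).
  { apply (is_RInt_derive (fun t => sin t ^ S (2 * m) * cos t)).
    intros; apply deriv_g.
    intros x _. apply (@ex_derive_continuous R_AbsRing R_NormedModule). auto_derive. auto. }
  assert (Hv : minus (sin (PI/2) ^ S (2 * m) * cos (PI/2)) (sin 0 ^ S (2 * m) * cos 0) = 0).
  { rewrite cos_PI2, sin_0. unfold minus, plus, opp; simpl. ring. }
  rewrite Hv in H.
  assert (H1 : is_RInt (fun t => sin t ^ (2 * m) * cos t ^ 2) 0 (PI/2) (J m)) by (apply (@RInt_correct R_CompleteNormedModule), ex_J).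
  assert (H2 : is_RInt (fun t => sin t ^ (2 * m + 2)) 0 (PI/2) (W (2 * m + 2))) by (apply (@RInt_correct R_CompleteNormedModule), ex_W).
  assert (H3 := is_RInt_minus _ _ _ _ _ _ (is_RInt_scal _ _ _ (INR (S (2 * m))) _ H1) H2).
  apply (is_RInt_ext _ (fun t => INR (S (2 * m)) * (sin t ^ (2 * m) * cos t ^ 2) - sin t ^ (2 * m + 2))) in H3.
  2:{ intros. unfold minus, plus, opp, scal; simpl. unfold mult; simpl. ring. }
  assert (E := is_RInt_unique _ _ _ _ H3). rewrite (is_RInt_unique _ _ _ _ H) in E.
  rewrite Rminus_eqR, Rscal_eqR in E. lra.
Qed.

Lemma W_split_pt m x : sin x ^ (2 * m) = sin x ^ (2 * m + 2) + sin x ^ (2 * m) * cos x ^ 2.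
Proof.
  rewrite pow_add. assert (H := sin2_cos2 x). unfold Rsqr in H.
  rewrite <- (Rmult_1_r (sin x ^ (2 * m))) at 1. rewrite <- H. ring.
Qed.

Lemma W_split m : W (2 * m) = W (2 * m + 2) + J m.
Proof.
  unfold W, J.
  assert (E := @RInt_plus R_CompleteNormedModule (fun t => sin t^(2*m+2)) (fun t => sin t^(2*m)*cos t^2) 0 (PI/2) (ex_W _) (ex_J _)).
  rewrite Rplus_eqR in E. rewrite <- E.
  apply RInt_ext. intros x _. apply W_split_pt.
Qed.

Lemma W_0 : W 0 = PI / 2.
Proof. unfold W. simpl. rewrite RInt_const, Rscal_eqR. ring. Qed.

Lemma W_even m : W (2 * m) = PI / 2 * aa m.
Proof.
  induction m.
  - rewrite aa_0. simpl (2 * 0)%nat. rewrite W_0. ring.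
  - assert (E1 := J_rel m). assert (E2 := W_split m).
    replace (2 * S m)%nat with (2 * m + 2)%nat by lia.
    rewrite aa_S. rewrite S_INR, mult_INR in E1. simpl INR in E1.
    assert (0 <= INR m) by apply pos_INR.
    apply Rmult_eq_reg_r with (2 * INR m + 2). 2: lra.
    field_simplify. 2: lra.
    rewrite <- E1. rewrite <- E1 in E2. rewrite IHm in E2. nra.
Qed.

Lemma J_val m : J m = PI / 2 * aa m / (2 * INR m + 2).
Proof.
  assert (E1 := J_rel m). assert (E2 := W_split m). rewrite W_even in E2.
  rewrite S_INR, mult_INR in E1. simpl INR in E1. assert (0 <= INR m) by apply pos_INR.
  apply Rmult_eq_reg_r with (2 * INR m + 2). 2: lra.
  field_simplify. 2: lra. nra.
Qed.


Lemma Ropp_eqR (a : R) : opp a = - a.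
Proof. reflexivity. Qed.
Lemma Rzero_eqR : (zero : R) = 0.
Proof. reflexivity. Qed.

Lemma rad_ge (c : nat -> R) : (forall n, Rabs (c n) <= 2 * INR (S n)) ->
  forall x, Rabs x < 1 -> Rbar_lt (Rabs x) (CV_radius c).
Proof.
  intros Hc x Hx. set (r := (Rabs x + 1) / 2).
  assert (Hr : 0 <= r < 1). { assert (0 <= Rabs x) by apply Rabs_pos. unfold r; lra. }
  destruct (CV_radius_bounded c) as [Hub _].
  assert (Hin : Rbar_le r (CV_radius c)).
  { apply Hub. exists (2 * / (1 - r)). intros n.
    rewrite Rabs_mult. rewrite (Rabs_pos_eq (r ^ n)) by (apply pow_le; lra).
    assert (H1 := geom_lin_bound r Hr n). assert (0 <= r ^ n) by (apply pow_le; lra).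
    assert (H2 := Hc n). assert (0 <= Rabs (c n)) by apply Rabs_pos. nra. }
  apply Rbar_lt_le_trans with r. simpl. unfold r. lra. exact Hin.
Qed.

Lemma aa_rad x : Rabs x < 1 -> Rbar_lt (Rabs x) (CV_radius aa).
Proof.
  apply rad_ge. intros n. rewrite Rabs_pos_eq by (left; apply aa_pos).
  assert (H := aa_le1 n). rewrite S_INR. assert (0 <= INR n) by apply pos_INR. lra.
Qed.

Lemma aa1_rad x : Rabs x < 1 -> Rbar_lt (Rabs x) (CV_radius (fun n => aa (S n))).
Proof.
  apply rad_ge. intros n. rewrite Rabs_pos_eq by (left; apply aa_pos).
  assert (H := aa_le1 (S n)). rewrite S_INR. assert (0 <= INR n) by apply pos_INR. lra.
Qed.

Lemma hh_rad x : Rabs x < 1 -> Rbar_lt (Rabs x) (CV_radius hh).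
Proof.
  apply rad_ge. intros n. destruct (hh_bounds n) as [H1 H2]. rewrite Rabs_pos_eq by lra.
  rewrite S_INR. lra.
Qed.

Lemma PSc (a : nat -> R) x : Rbar_lt (Rabs x) (CV_radius a) -> is_pseries a x (PSeries a x).
Proof. intros H. apply PSeries_correct. apply CV_radius_inside. exact H. Qed.

Lemma PScD (a : nat -> R) x : Rbar_lt (Rabs x) (CV_radius a) ->
  is_pseries (PS_derive a) x (PSeries (PS_derive a) x).
Proof. intros H. apply PSc. rewrite CV_radius_derive. exact H. Qed.

Lemma coefA0 : 2 * (INR 1 * aa 1 + - 0) = aa 0.
Proof. rewrite aa_S, aa_0. simpl INR. field. Qed.

Lemma coefAS n : 2 * (INR (S (S n)) * aa (S (S n)) + - (INR (S n) * aa (S n))) = aa (S n).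
Proof.
  rewrite (aa_S (S n)). rewrite !S_INR.
  assert (0 <= INR n) by apply pos_INR. field. lra.
Qed.

Lemma A_ode y : Rabs y < 1 -> 2 * (1 - y) * PSeries (PS_derive aa) y = PSeries aa y.
Proof.
  intros Hy. set (D := PS_derive aa).
  assert (HD : is_pseries D y (PSeries D y)) by (apply PScD, aa_rad, Hy).
  assert (HI := is_pseries_incr_1 _ _ _ HD).
  assert (HM := is_pseries_minus _ _ _ _ _ HD HI).
  assert (HS := is_pseries_scal 2 _ _ _ (Rmult_comm _ _) HM).
  assert (HE : is_pseries aa y (scal 2 (plus (PSeries D y) (opp (scal y (PSeries D y)))))).
  { eapply is_pseries_ext. 2: exact HS. intros n.
    destruct n; [apply coefA0 | apply coefAS]. }
  rewrite (is_pseries_unique _ _ _ HE).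
  change (2 * (1 - y) * PSeries D y = 2 * (PSeries D y + - (y * PSeries D y))). ring.
Qed.

Lemma const_deriv0 (f : R -> R) a b : a <= b -> (forall y, a < y < b -> is_derive f y 0) ->
  (forall y, a <= y <= b -> continuity_pt f y) -> f b = f a.
Proof.
  intros Hab Hd Hc.
  destruct (MVT_gen f a b (fun _ => 0)) as [c [_ Hc2]].
  - rewrite Rmin_left, Rmax_right by lra. exact Hd.
  - rewrite Rmin_left, Rmax_right by lra. exact Hc.
  - lra.
Qed.

Lemma deriv_cont (f : R -> R) y l : is_derive f y l -> continuity_pt f y.
Proof.
  intros H. apply continuity_pt_filterlim.
  apply (@ex_derive_continuous R_AbsRing R_NormedModule). exists l. exact H.
Qed.

Lemma const_ball (f : R -> R) : (forall y, Rabs y < 1 -> is_derive f y 0) ->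
  forall x, Rabs x < 1 -> f x = f 0.
Proof.
  intros Hd x Hx. assert (Hx' := Rabs_def2 _ _ Hx). destruct (Rle_or_lt 0 x) as [H | H].
  - apply const_deriv0. lra.
    intros y Hy; apply Hd; apply Rabs_def1; lra.
    intros y Hy; eapply deriv_cont; apply Hd; apply Rabs_def1; lra.
  - symmetry. apply const_deriv0. lra.
    intros y Hy; apply Hd. apply Rabs_def1; apply Rabs_def2 in Hx; lra.
    intros y Hy; eapply deriv_cont; apply Hd. apply Rabs_def1; apply Rabs_def2 in Hx; lra.
Qed.

Lemma is_derive_sqrt1m y : y < 1 -> is_derive (fun t => sqrt (1 - t)) y (- / (2 * sqrt (1 - y))).
Proof.
  intros Hy. auto_derive. lra. unfold Rminus. ring.
Qed.

Lemma A_val x : Rabs x < 1 -> PSeries aa x = / sqrt (1 - x).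
Proof.
  intros Hx.
  assert (Hd : forall y, Rabs y < 1 -> is_derive (fun t => sqrt (1 - t) * PSeries aa t) y 0).
  { intros y Hy. apply Rabs_def2 in Hy as Hy'.
    eapply is_derive_eq.
    apply (is_derive_mult (fun t => sqrt (1 - t)) (PSeries aa) y _ _
            (is_derive_sqrt1m y ltac:(lra)) (is_derive_PSeries aa y (aa_rad y Hy)) Rmult_comm).
    rewrite Rplus_eqR, !Rmult_eqR. rewrite <- (A_ode y Hy).
    assert (Hs : 0 < sqrt (1 - y)) by (apply sqrt_lt_R0; lra).
    assert (Hs2 := sqrt_sqrt (1 - y) ltac:(lra)).
    set (s := sqrt (1 - y)) in *. change (mult s (PSeries (PS_derive aa) y)) with (s * PSeries (PS_derive aa) y).
    rewrite <- Hs2. field. lra. }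
  assert (E := const_ball _ Hd x Hx). simpl in E. rewrite PSeries_0, aa_0 in E.
  replace (1 - 0) with 1 in E by ring. rewrite sqrt_1 in E.
  assert (Hs : 0 < sqrt (1 - x)) by (apply sqrt_lt_R0; apply Rabs_def2 in Hx; lra).
  apply Rmult_eq_reg_l with (sqrt (1 - x)). rewrite E. field. lra. lra.
Qed.

Lemma coefH0 : 2 * (INR 1 * hh 1 + - 0) + - hh 0 = aa 0 + aa 1.
Proof. assert (H := hh_rec 0). rewrite hh_0 in *. simpl INR in *. lra. Qed.

Lemma coefHS n : 2 * (INR (S (S n)) * hh (S (S n)) + - (INR (S n) * hh (S n))) + - hh (S n)
   = aa (S n) + aa (S (S n)).
Proof. assert (H := hh_rec (S n)). rewrite !S_INR in *. lra. Qed.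

Lemma H_ode y : Rabs y < 1 ->
  2 * (1 - y) * PSeries (PS_derive hh) y - PSeries hh y = PSeries aa y + PSeries (fun n => aa (S n)) y.
Proof.
  intros Hy. set (D := PS_derive hh).
  assert (HD : is_pseries D y (PSeries D y)) by (apply PScD, hh_rad, Hy).
  assert (HH : is_pseries hh y (PSeries hh y)) by (apply PSc, hh_rad, Hy).
  assert (HI := is_pseries_incr_1 _ _ _ HD).
  assert (HM := is_pseries_minus _ _ _ _ _ HD HI).
  assert (HS := is_pseries_scal 2 _ _ _ (Rmult_comm _ _) HM).
  assert (HM2 := is_pseries_minus _ _ _ _ _ HS HH).
  assert (HE : is_pseries (fun n => aa n + aa (S n)) y
     (plus (scal 2 (plus (PSeries D y) (opp (scal y (PSeries D y))))) (opp (PSeries hh y)))).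
  { eapply is_pseries_ext. 2: exact HM2. intros n.
    destruct n; [apply coefH0 | apply coefHS]. }
  assert (HA : is_pseries aa y (PSeries aa y)) by (apply PSc, aa_rad, Hy).
  assert (HA1 : is_pseries (fun n => aa (S n)) y (PSeries (fun n => aa (S n)) y)) by (apply PSc, aa1_rad, Hy).
  assert (HP := is_pseries_plus _ _ _ _ _ HA HA1).
  assert (HP' : is_pseries (fun n => aa n + aa (S n)) y (plus (PSeries aa y) (PSeries (fun n => aa (S n)) y))).
  { eapply is_pseries_ext. 2: exact HP. intros n. reflexivity. }
  assert (E1 := is_pseries_unique _ _ _ HE). rewrite (is_pseries_unique _ _ _ HP') in E1.
  change (PSeries aa y + PSeries (fun n => aa (S n)) y =
    2 * (PSeries D y + - (y * PSeries D y)) + - PSeries hh y) in E1.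
  rewrite E1. ring.
Qed.

Lemma A1_val x : 0 < x < 1 -> PSeries (fun n => aa (S n)) x = (/ sqrt (1 - x) - 1) / x.
Proof.
  intros Hx. assert (Hx' : Rabs x < 1) by (apply Rabs_def1; lra).
  assert (E := PSeries_decr_1 aa x (CV_radius_inside _ _ (aa_rad x Hx'))).
  rewrite A_val in E by exact Hx'. rewrite aa_0 in E.
  change (PS_decr_1 aa) with (fun n => aa (S n)) in E.
  rewrite E. field. lra.
Qed.

Lemma is_derive_Kpart y : y < 1 -> is_derive (fun t => - ln ((1 + sqrt (1 - t)) / 2) + ln (1 - t)) y
   (/ (2 * sqrt (1 - y) * (1 + sqrt (1 - y))) - / (1 - y)).
Proof.
  intros Hy.
  assert (Hs : 0 < sqrt (1 - y)) by (apply sqrt_lt_R0; lra).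
  assert (Hs2 := sqrt_sqrt (1 - y) ltac:(lra)).
  auto_derive; change (1 + - y) with (1 - y).
  - repeat split; try lra; try (apply Rmult_lt_0_compat; lra).
  - set (s := sqrt (1 - y)) in *. rewrite <- Hs2. field. lra.
Qed.

Lemma is_derive_mult_R (f g : R -> R) x df dg : is_derive f x df -> is_derive g x dg ->
  is_derive (fun t => f t * g t) x (df * g x + f x * dg).
Proof. intros H1 H2. exact (is_derive_mult f g x df dg H1 H2 Rmult_comm). Qed.

Lemma is_derive_plus_R (f g : R -> R) x df dg : is_derive f x df -> is_derive g x dg ->
  is_derive (fun t => f t + g t) x (df + dg).
Proof. intros H1 H2. exact (is_derive_plus f g x df dg H1 H2). Qed.

Definition Phi (y : R) : R :=
  sqrt (1 - y) * PSeries hh y + (- ln ((1 + sqrt (1 - y)) / 2) + ln (1 - y)).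

Lemma Phi_derive y : Rabs y < 1 -> is_derive Phi y
  (- / (2 * sqrt (1 - y)) * PSeries hh y + sqrt (1 - y) * PSeries (PS_derive hh) y +
   (/ (2 * sqrt (1 - y) * (1 + sqrt (1 - y))) - / (1 - y))).
Proof.
  intros Hy. assert (Hy' := Rabs_def2 _ _ Hy).
  apply (is_derive_plus_R (fun t => sqrt (1 - t) * PSeries hh t) (fun t => - ln ((1 + sqrt (1 - t)) / 2) + ln (1 - t))).
  apply (is_derive_mult_R (fun t => sqrt (1 - t)) (PSeries hh)). apply is_derive_sqrt1m; lra.
  apply is_derive_PSeries, hh_rad, Hy. apply is_derive_Kpart; lra.
Qed.

Lemma Phi_derive0 y : 0 < y < 1 -> is_derive Phi y 0.
Proof.
  intros Hy. assert (Hy' : Rabs y < 1) by (apply Rabs_def1; lra).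
  eapply is_derive_eq. apply Phi_derive, Hy'.
  assert (E := H_ode y Hy'). rewrite A_val, A1_val in E by (auto; lra).
  assert (Hs : 0 < sqrt (1 - y)) by (apply sqrt_lt_R0; lra).
  assert (Hs2 := sqrt_sqrt (1 - y) ltac:(lra)).
  assert (Hs1 : sqrt (1 - y) < 1).
  { nra. }
  set (s := sqrt (1 - y)) in *. set (P := PSeries hh y) in *. set (Q := PSeries (PS_derive hh) y) in *.
  assert (Ey : y = 1 - s * s) by lra.
  rewrite Ey in E |- *. 
  assert (EQ : Q = (P + / s + (/ s - 1) / (1 - s * s)) / (2 * s * s)).
  { replace (P + / s + (/ s - 1) / (1 - s * s)) with (P + (2 * (1 - (1 - s * s)) * Q - P)) by (rewrite E; ring). field. lra. }
  rewrite EQ. field. repeat split; nra.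
Qed.

Lemma HS_val x : 0 <= x < 1 ->
  sqrt (1 - x) * PSeries hh x = ln ((1 + sqrt (1 - x)) / 2) - ln (1 - x).
Proof.
  intros Hx.
  assert (E : Phi x = Phi 0).
  { apply const_deriv0. lra. intros y Hy. apply Phi_derive0. lra.
    intros y Hy. eapply deriv_cont. apply Phi_derive. apply Rabs_def1; lra. }
  unfold Phi in E. rewrite PSeries_0, hh_0 in E.
  replace (1 - 0) with 1 in E by ring. rewrite sqrt_1 in E.
  replace ((1 + 1) / 2) with 1 in E by field. rewrite ln_1 in E. lra.
Qed.


Lemma sum_Sn_R (a : nat -> R) n : sum_n a (S n) = sum_n a n + a (S n).
Proof. exact (sum_Sn a n). Qed.
Lemma sum_O_R (a : nat -> R) : sum_n a 0 = a 0%nat.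
Proof. exact (sum_O a). Qed.
Lemma is_series_ext_R (a b : nat -> R) l : (forall n, a n = b n) -> is_series a l -> is_series b l.
Proof. intros H1 H2. exact (@is_series_ext R_AbsRing R_NormedModule a b l H1 H2). Qed.
Lemma is_series_scal_R (a : nat -> R) c l : is_series a l -> is_series (fun n => c * a n) (c * l).
Proof. intros H. exact (is_series_scal c a l H). Qed.
Lemma is_series_incr_1_R (a : nat -> R) l : is_series a (l + a 0%nat) -> is_series (fun k => a (S k)) l.
Proof. intros H. exact (@is_series_incr_1 R_AbsRing R_NormedModule a l H). Qed.

Definition u (m : nat) (t : R) : R := hh (S m) * (sin t ^ (2 * m) * cos t ^ 2).
Definition fcl (t : R) : R := cos t * (ln ((1 + cos t) / 2) - 2 * ln (cos t)) / sin t ^ 2.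

Lemma sc_pos t : 0 < t < PI / 2 -> 0 < sin t /\ 0 < cos t.
Proof.
  intros Ht. split. apply sin_gt_0; lra. apply cos_gt_0; lra.
Qed.

Lemma u_series t : 0 < t < PI / 2 -> is_series (fun m => u m t) (fcl t).
Proof.
  intros Ht. destruct (sc_pos t Ht) as [Hs Hc].
  set (x := sin t ^ 2).
  assert (Hsc := sin2_cos2 t). unfold Rsqr in Hsc.
  assert (Hx : 0 < x < 1). { unfold x. simpl. nra. }
  assert (Hx' : Rabs x < 1) by (apply Rabs_def1; lra).
  assert (Hsq : sqrt (1 - x) = cos t).
  { replace (1 - x) with (cos t ^ 2) by (unfold x; simpl; lra). apply sqrt_pow2. lra. }
  assert (Hln : ln (1 - x) = 2 * ln (cos t)).
  { replace (1 - x) with (cos t ^ 2) by (unfold x; simpl; lra). rewrite ln_pow by lra. simpl INR. ring. }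
  assert (HV := HS_val x ltac:(lra)). rewrite Hsq, Hln in HV.
  assert (HP := PSc hh x (hh_rad x Hx')). apply is_pseries_R in HP.
  assert (HP1 : is_series (fun k => hh (S k) * x ^ (S k)) (PSeries hh x)).
  { apply (is_series_incr_1_R (fun n => hh n * x ^ n)). rewrite hh_0. 
    replace (PSeries hh x + 0 * x ^ 0) with (PSeries hh x) by ring. exact HP. }
  apply (is_series_scal_R _ (cos t ^ 2 / x)) in HP1.
  eapply is_series_ext_R. 2: {
    replace (fcl t) with (cos t ^ 2 / x * PSeries hh x). exact HP1.
    unfold fcl. fold x. apply Rmult_eq_reg_l with (sqrt (1 - x)). 2: rewrite Hsq; lra.
    rewrite Hsq. transitivity (cos t ^ 2 / x * (cos t * PSeries hh x)). ring. rewrite HV.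
    field. lra. }
  intros n. unfold u. simpl pow at 2. rewrite pow_mult. fold x. field. lra.
Qed.

Lemma partial_le (a : nat -> R) l : (forall n, 0 <= a n) -> is_series a l -> forall M, sum_n a M <= l.
Proof.
  intros Ha H M.
  assert (Hm : forall k, sum_n a M <= sum_n a (k + M)).
  { induction k. simpl; lra. change (S k + M)%nat with (S (k + M)). rewrite sum_Sn_R. specialize (Ha (S (k + M))). lra. }
  assert (Hl : is_lim_seq (sum_n a) l) by exact H.
  assert (E := is_lim_seq_le_loc (fun _ => sum_n a M) (sum_n a) (sum_n a M) l).
  simpl in E. apply E.
  - exists M. intros n Hn. replace n with ((n - M) + M)%nat by lia. apply Hm.
  - apply is_lim_seq_const.
  - exact Hl.
Qed.

Lemma ln_le_sub1 y : 0 < y -> ln y <= y - 1.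
Proof.
  intros Hy. assert (E := exp_ineq1_le (y - 1)).
  rewrite <- (ln_exp (y - 1)). destruct (Req_dec y (exp (y - 1))) as [Heq | Hne].
  rewrite <- Heq. lra. left. apply ln_increasing. lra. lra.
Qed.

Lemma fcl_le4 t : 0 < t < PI / 2 -> fcl t <= 4.
Proof.
  intros Ht. destruct (sc_pos t Ht) as [Hs Hc].
  assert (Hsc := sin2_cos2 t). unfold Rsqr in Hsc.
  unfold fcl. set (s := sin t) in *. set (c := cos t) in *.
  assert (Hc1 : c < 1) by nra.
  assert (Hs2 : 0 < s ^ 2) by (simpl; nra).
  destruct (Rle_or_lt (1/2) c) as [Hc2 | Hc2].
  - assert (E : ln ((1 + c) / 2) - 2 * ln c = ln ((1 + c) / (2 * c ^ 2))).
    { unfold Rdiv. rewrite !ln_mult, ln_Rinv, ln_Rinv, ln_mult, ln_pow; try lra; try nra.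
      simpl INR. ring. apply Rinv_0_lt_compat. simpl; nra. }
    rewrite E. assert (L := ln_le_sub1 ((1 + c) / (2 * c ^ 2)) ltac:(apply Rdiv_lt_0_compat; nra)).
    apply Rle_trans with (c * ((1 + c) / (2 * c ^ 2) - 1) / s ^ 2).
    { unfold Rdiv. apply Rmult_le_compat_r. left; apply Rinv_0_lt_compat; lra.
      apply Rmult_le_compat_l; lra. }
    replace (s ^ 2) with ((1 - c) * (1 + c)) by (simpl; nra).
    apply Rmult_le_reg_r with (2 * c * (1 + c)). nra.
    replace (c * ((1 + c) / (2 * c ^ 2) - 1) / ((1 - c) * (1 + c)) * (2 * c * (1 + c))) with (1 + 2 * c) by (field; repeat split; nra). nra.
  - assert (L1 : ln ((1 + c) / 2) <= 0).
    { rewrite <- ln_1. destruct (Req_dec ((1 + c) / 2) 1). rewrite H; lra. left; apply ln_increasing; lra. }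
    assert (L2 : - ln c <= / c - 1).
    { rewrite <- ln_Rinv by lra. apply ln_le_sub1. apply Rinv_0_lt_compat; lra. }
    assert (L3 : - (c * ln c) <= 1 - c).
    { replace (1 - c) with (c * (/ c - 1)) by (field; lra). nra. }
    assert (Hs3 : 3 / 4 < s ^ 2) by (simpl; nra).
    apply Rmult_le_reg_r with (s ^ 2). lra.
    unfold Rdiv. rewrite Rmult_assoc, Rinv_l by lra. nra.
Qed.

Lemma u_nonneg m t : 0 <= u m t.
Proof.
  unfold u. apply Rmult_le_pos. destruct (hh_bounds (S m)); lra.
  apply Rmult_le_pos. rewrite pow_mult. apply pow_le. simpl; nra. simpl; nra.
Qed.

Lemma FM_bounds M t : 0 < t < PI / 2 -> 0 <= sum_n (fun m => u m t) M <= 4.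
Proof.
  intros Ht. split.
  - induction M. rewrite sum_O_R. apply u_nonneg. rewrite sum_Sn_R. assert (H := u_nonneg (S M) t). lra.
  - apply Rle_trans with (fcl t). apply partial_le. intros; apply u_nonneg. apply u_series, Ht.
    apply fcl_le4, Ht.
Qed.


Lemma div_eq_cross a b c d : b <> 0 -> d <> 0 -> a * d = c * b -> a / b = c / d.
Proof. intros Hb Hd H. apply Rmult_eq_reg_r with (b * d). 2: now apply Rmult_integral_contrapositive. field_simplify; auto. rewrite H. field; auto. Qed.


Definition V (t : R) : R :=
  (2 / sin t - 2) * ln (cos t) - ln ((1 + cos t) / 2) / sin t + 2 * ln (1 + sin t) - sin t / (1 + cos t).

Lemma V_derive t : 0 < t < PI / 2 -> is_derive V t (fcl t).
Proof.
  intros Ht. destruct (sc_pos t Ht) as [Hs Hc].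
  assert (Hsc := sin2_cos2 t). unfold Rsqr in Hsc.
  assert (Hc1 : cos t < 1) by nra.
  unfold V, fcl. auto_derive.
  - repeat split; try lra; try (apply Rgt_not_eq; lra).
  - set (s := sin t) in *. set (c := cos t) in *. unfold Rdiv.
    set (L1 := ln c) in *. set (L2 := ln ((1 + c) * / 2)).
    field_simplify. 
    + apply div_eq_cross; try (apply Rgt_not_eq; repeat (apply Rplus_lt_0_compat || apply Rmult_lt_0_compat || apply pow_lt); lra).
      apply Rminus_diag_uniq. match goal with |- ?A - ?B = 0 => replace (A - B) with ((s * s + c * c - 1) * (2 * s^4 * c^2 - s^5 * c + 3 * s^4 * c + 2 * s^4)) by ring end. rewrite Hsc. ring.
    + lra.
    + repeat split; lra.
Qed.



Lemma fcl_cont t : 0 < t < PI / 2 -> continuous fcl t.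
Proof.
  intros Ht. destruct (sc_pos t Ht) as [Hs Hc].
  assert (Hsc := sin2_cos2 t). unfold Rsqr in Hsc.
  assert (Hc1 : cos t < 1) by nra.
  apply (@ex_derive_continuous R_AbsRing R_NormedModule).
  unfold fcl. auto_derive. repeat split; try lra; try (apply Rgt_not_eq; simpl; nra).
Qed.

Lemma RInt_fcl e b : 0 < e <= b -> b < PI / 2 -> RInt fcl e b = V b - V e.
Proof.
  intros He Hb. apply is_RInt_unique.
  apply (is_RInt_derive V fcl).
  - intros x Hx. rewrite Rmin_left, Rmax_right in Hx by lra. apply V_derive. lra.
  - intros x Hx. rewrite Rmin_left, Rmax_right in Hx by lra. apply fcl_cont. lra.
Qed.

Lemma fcl_nonneg t : 0 < t < PI / 2 -> 0 <= fcl t.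
Proof.
  intros Ht. apply Rle_trans with (sum_n (fun m => u m t) 0).
  rewrite sum_O_R. apply u_nonneg. apply partial_le. intros; apply u_nonneg. apply u_series, Ht.
Qed.

Definition g0 (t : R) : R := - 2 * ln (cos t) + 2 * ln (1 + sin t) - sin t / (1 + cos t).
Definition G2 (t : R) : R := - ln ((1 + cos t) / 2) / sin t + 2 * ln (1 + sin t) - sin t / (1 + cos t).

Lemma V_small t : 0 < t < PI / 2 -> Rabs (V t) <= 4 * (sin t / cos t) + Rabs (g0 t).
Proof.
  intros Ht. destruct (sc_pos t Ht) as [Hs Hc].
  assert (E : V t = - (fcl t * (sin t / cos t)) + g0 t).
  { unfold V, fcl, g0. field. split; lra. }
  rewrite E. assert (H1 := fcl_nonneg t Ht). assert (H2 := fcl_le4 t Ht).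
  assert (H3 : 0 < sin t / cos t) by (apply Rdiv_lt_0_compat; lra).
  eapply Rle_trans. apply Rabs_triang. rewrite Rabs_Ropp.
  rewrite Rabs_pos_eq by nra. nra.
Qed.

Lemma V_near t : 0 < t < PI / 2 ->
  Rabs (V t - (3 * ln 2 - 1)) <= 2 * (cos t / sin t) + Rabs (G2 t - (3 * ln 2 - 1)).
Proof.
  intros Ht. destruct (sc_pos t Ht) as [Hs Hc].
  assert (Hsc := sin2_cos2 t). unfold Rsqr in Hsc.
  assert (Hc1 : cos t < 1) by nra. assert (Hs1 : sin t < 1) by nra.
  assert (E : V t - (3 * ln 2 - 1) = (2 / sin t - 2) * ln (cos t) + (G2 t - (3 * ln 2 - 1))).
  { unfold V, G2. field. lra. }
  rewrite E. eapply Rle_trans. apply Rabs_triang. apply Rplus_le_compat_r.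
  assert (L1 : ln (cos t) <= 0).
  { rewrite <- ln_1. left; apply ln_increasing; lra. }
  assert (L2 : - ln (cos t) <= / cos t - 1).
  { rewrite <- ln_Rinv by lra. apply ln_le_sub1. apply Rinv_0_lt_compat; lra. }
  assert (L3 : - (cos t * ln (cos t)) <= 1).
  { assert (- (cos t * ln (cos t)) <= cos t * (/ cos t - 1)) by nra.
    replace (cos t * (/ cos t - 1)) with (1 - cos t) in H by (field; lra). lra. }
  assert (Hk : 2 / sin t - 2 = 2 * (1 - sin t) / sin t) by (field; lra).
  rewrite Hk.
  assert (Hp : 0 <= 2 * (1 - sin t) / sin t).
  { unfold Rdiv; apply Rmult_le_pos; [lra | left; apply Rinv_0_lt_compat; lra]. }
  rewrite Rabs_mult, (Rabs_pos_eq _ Hp). rewrite Rabs_left1 by exact L1.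
  assert (H1s : 1 - sin t <= cos t * cos t) by nra.
  apply Rmult_le_reg_r with (sin t). lra.
  replace (2 * (1 - sin t) / sin t * - ln (cos t) * sin t) with (2 * ((1 - sin t) * - ln (cos t))) by (field; lra).
  replace (2 * (cos t / sin t) * sin t) with (2 * cos t) by (field; lra).
  assert ((1 - sin t) * - ln (cos t) <= cos t * cos t * - ln (cos t)).
  { apply Rmult_le_compat_r; lra. }
  nra.
Qed.


Lemma RInt_plus_R (f g : R -> R) a b : ex_RInt f a b -> ex_RInt g a b ->
  RInt (fun x => f x + g x) a b = RInt f a b + RInt g a b.
Proof. intros H1 H2. exact (@RInt_plus R_CompleteNormedModule f g a b H1 H2). Qed.
Lemma RInt_minus_R (f g : R -> R) a b : ex_RInt f a b -> ex_RInt g a b ->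
  RInt (fun x => f x - g x) a b = RInt f a b - RInt g a b.
Proof. intros H1 H2. exact (@RInt_minus R_CompleteNormedModule f g a b H1 H2). Qed.
Lemma RInt_scal_R (f : R -> R) a b l : ex_RInt f a b ->
  RInt (fun x => l * f x) a b = l * RInt f a b.
Proof. intros H1. exact (@RInt_scal R_CompleteNormedModule f a b l H1). Qed.
Lemma RInt_Chasles_R (f : R -> R) a b c : ex_RInt f a b -> ex_RInt f b c ->
  RInt f a b + RInt f b c = RInt f a c.
Proof. intros H1 H2. exact (@RInt_Chasles R_CompleteNormedModule f a b c H1 H2). Qed.
Lemma ex_RInt_cont_R (f : R -> R) a b : (forall x, continuous f x) -> ex_RInt f a b.
Proof. intros H. apply (@ex_RInt_continuous R_CompleteNormedModule). intros; apply H. Qed.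

Definition FM (M : nat) (t : R) : R := sum_n (fun m => u m t) M.

Lemma u_cont m t : continuous (u m) t.
Proof. apply (@ex_derive_continuous R_AbsRing R_NormedModule). unfold u. auto_derive. auto. Qed.

Lemma FM_cont M t : continuous (FM M) t.
Proof.
  induction M.
  - apply (@continuous_ext R_UniformSpace R_UniformSpace (u 0) (FM 0)).
    intros x. unfold FM. rewrite sum_O_R. reflexivity. apply u_cont.
  - apply (@continuous_ext R_UniformSpace R_UniformSpace (fun x => FM M x + u (S M) x) (FM (S M))).
    intros x. unfold FM. rewrite sum_Sn_R. reflexivity.
    apply (@continuous_plus R_UniformSpace R_AbsRing R_NormedModule). apply IHM. apply u_cont.
Qed.

Lemma ex_RInt_FM M a b : ex_RInt (FM M) a b.
Proof. apply ex_RInt_cont_R. apply FM_cont. Qed.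
Lemma ex_RInt_u m a b : ex_RInt (u m) a b.
Proof. apply ex_RInt_cont_R. apply u_cont. Qed.

Lemma RInt_u m : RInt (u m) 0 (PI / 2) = hh (S m) * J m.
Proof. unfold u, J. apply RInt_scal_R. apply ex_J. Qed.

Lemma T_int M : sum_n (fun m => hh (S m) * J m) M = RInt (FM M) 0 (PI / 2).
Proof.
  induction M.
  - rewrite sum_O_R. rewrite <- RInt_u.
    apply (RInt_ext (u 0) (FM 0)). intros x _. unfold FM. rewrite sum_O_R. reflexivity.
  - rewrite sum_Sn_R, IHM, <- RInt_u.
    rewrite <- (RInt_plus_R (FM M) (u (S M))); [ | apply ex_RInt_FM | apply ex_RInt_u].
    apply (RInt_ext (fun x => FM M x + u (S M) x) (FM (S M))).
    intros x _. unfold FM. rewrite sum_Sn_R. reflexivity.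
Qed.


Lemma cont_eps (g : R -> R) x l : is_derive g x l ->
  forall eps, 0 < eps -> exists del, 0 < del /\ forall y, Rabs (y - x) < del -> Rabs (g y - g x) < eps.
Proof.
  intros H eps He. assert (C := deriv_cont g x l H).
  unfold continuity_pt, continue_in, limit1_in, limit_in in C.
  destruct (C eps He) as [del [Hd Hy]]. exists del. split. exact Hd.
  intros y Hyd. destruct (Req_dec y x) as [Hxy | Hxy].
  - subst. rewrite Rminus_diag, Rabs_R0. exact He.
  - apply (Hy y). split. split. exact I. auto. exact Hyd.
Qed.

Definition g1 (t : R) : R := sin t / cos t.
Definition h1 (t : R) : R := cos t / sin t.

Lemma g1_cont eps : 0 < eps -> exists del, 0 < del /\ forall y, Rabs y < del -> Rabs (g1 y) < eps.
Proof.
  intros He. assert (D : exists l, is_derive g1 0 l).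
  { eexists. unfold g1. auto_derive; try reflexivity. rewrite cos_0. lra. }
  destruct D as [l D]. destruct (cont_eps g1 0 l D eps He) as [del [Hd H]].
  exists del. split. exact Hd. intros y Hy. specialize (H y). rewrite Rminus_0_r in H.
  unfold g1 in *. rewrite sin_0, cos_0 in H. replace (0 / 1) with 0 in H by field.
  rewrite Rminus_0_r in H. apply H, Hy.
Qed.

Lemma g0_cont eps : 0 < eps -> exists del, 0 < del /\ forall y, Rabs y < del -> Rabs (g0 y) < eps.
Proof.
  intros He. assert (D : exists l, is_derive g0 0 l).
  { eexists. unfold g0. auto_derive; try reflexivity. rewrite cos_0, sin_0. repeat split; lra. }
  destruct D as [l D]. destruct (cont_eps g0 0 l D eps He) as [del [Hd H]].
  exists del. split. exact Hd. intros y Hy. specialize (H y). rewrite Rminus_0_r in H.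
  assert (E : g0 0 = 0).
  { unfold g0. rewrite cos_0, sin_0. rewrite Rplus_0_r, ln_1. field. }
  rewrite E, Rminus_0_r in H. apply H, Hy.
Qed.

Lemma h1_cont eps : 0 < eps -> exists del, 0 < del /\ forall y, Rabs (y - PI / 2) < del -> Rabs (h1 y) < eps.
Proof.
  intros He. assert (D : exists l, is_derive h1 (PI / 2) l).
  { eexists. unfold h1. auto_derive; try reflexivity. rewrite sin_PI2. lra. }
  destruct D as [l D]. destruct (cont_eps h1 _ l D eps He) as [del [Hd H]].
  exists del. split. exact Hd. intros y Hy. specialize (H y Hy).
  unfold h1 in *. rewrite sin_PI2, cos_PI2 in H. replace (0 / 1) with 0 in H by field.
  rewrite Rminus_0_r in H. exact H.
Qed.

Lemma G2_cont eps : 0 < eps -> exists del, 0 < del /\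
  forall y, Rabs (y - PI / 2) < del -> Rabs (G2 y - (3 * ln 2 - 1)) < eps.
Proof.
  intros He. assert (D : exists l, is_derive G2 (PI / 2) l).
  { eexists. unfold G2. auto_derive; try reflexivity. rewrite sin_PI2, cos_PI2. repeat split; lra. }
  destruct D as [l D]. destruct (cont_eps G2 _ l D eps He) as [del [Hd H]].
  exists del. split. exact Hd. intros y Hy. specialize (H y Hy).
  assert (E : G2 (PI / 2) = 3 * ln 2 - 1).
  { unfold G2. rewrite sin_PI2, cos_PI2. replace ((1 + 0) / 2) with (/ 2) by field.
    rewrite ln_Rinv by lra. replace (1 + 1) with 2 by ring. field. }
  rewrite E in H. exact H.
Qed.


Lemma abs_le_split x a : Rabs x <= a -> - a <= x <= a.
Proof. unfold Rabs. destruct (Rcase_abs x); intros; lra. Qed.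

Lemma is_series_minus_R (a b : nat -> R) la lb : is_series a la -> is_series b lb ->
  is_series (fun n => a n - b n) (la - lb).
Proof. intros H1 H2. exact (@is_series_minus R_AbsRing R_NormedModule a b la lb H1 H2). Qed.

Lemma sum_n_minus_R (a b : nat -> R) M : sum_n (fun n => a n - b n) M = sum_n a M - sum_n b M.
Proof.
  induction M. rewrite !sum_O_R. reflexivity.
  rewrite !sum_Sn_R, IHM. change ((sum_n a M - sum_n b M) + (a (S M) - b (S M)) = sum_n a M + a (S M) - (sum_n b M + b (S M))). ring.
Qed.

Definition w (b : R) (m : nat) : R := hh (S m) * sin b ^ (2 * m).

Lemma w_series b : 0 < b < PI / 2 -> is_series (w b) (fcl b / cos b ^ 2).
Proof.
  intros Hb. destruct (sc_pos b Hb) as [Hs Hc].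
  assert (H := is_series_scal_R _ (/ cos b ^ 2) _ (u_series b Hb)).
  eapply is_series_ext_R. 2: { replace (fcl b / cos b ^ 2) with (/ cos b ^ 2 * fcl b) by (unfold Rdiv; ring). exact H. }
  intros n. unfold u, w. field. apply Rgt_not_eq; lra.
Qed.

Lemma u_le_w m t b : 0 < t <= b -> b < PI / 2 -> u m t <= w b m.
Proof.
  intros Ht Hb. unfold u, w.
  assert (Hs : 0 < sin t) by (apply sin_gt_0; lra).
  assert (Hst : sin t <= sin b).
  { destruct (Req_dec t b). subst; lra. left. apply sin_increasing_1; lra. }
  assert (P1 : sin t ^ (2 * m) <= sin b ^ (2 * m)) by (apply pow_incr; lra).
  assert (P0 : 0 <= sin t ^ (2 * m)) by (apply pow_le; lra).
  assert (Hsc := sin2_cos2 t). unfold Rsqr in Hsc.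
  assert (C1 : cos t ^ 2 <= 1) by (simpl; nra).
  assert (C0 : 0 <= cos t ^ 2) by (simpl; nra).
  destruct (hh_bounds (S m)) as [H0 _].
  apply Rmult_le_compat_l. exact H0. nra.
Qed.

Lemma tail_bound t b M : 0 < t <= b -> b < PI / 2 ->
  0 <= fcl t - FM M t <= fcl b / cos b ^ 2 - sum_n (w b) M.
Proof.
  intros Ht Hb. split.
  - assert (H := partial_le (fun m => u m t) (fcl t) (fun n => u_nonneg n t) (u_series t ltac:(lra)) M).
    unfold FM. lra.
  - assert (Hd := is_series_minus_R _ _ _ _ (w_series b ltac:(lra)) (u_series t ltac:(lra))).
    assert (Hn : forall n, 0 <= w b n - u n t) by (intros n; assert (X := u_le_w n t b Ht Hb); lra).
    assert (H := partial_le (fun n => w b n - u n t) _ Hn Hd M).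
    rewrite sum_n_minus_R in H. unfold FM. lra.
Qed.

Lemma RInt_FM_bounds M a b : 0 <= a <= b -> b <= PI / 2 ->
  0 <= RInt (FM M) a b <= 4 * (b - a).
Proof.
  intros Ha Hb. split.
  - assert (H := RInt_le (fun _ => 0) (FM M) a b ltac:(lra) (ex_RInt_cont_R _ _ _ (fun x => continuous_const 0 x))
       (ex_RInt_FM M a b) (fun x Hx => proj1 (FM_bounds M x ltac:(lra)))).
    rewrite RInt_const, Rscal_eqR in H. lra.
  - assert (H := RInt_le (FM M) (fun _ => 4) a b ltac:(lra) (ex_RInt_FM M a b)
       (ex_RInt_cont_R _ _ _ (fun x => continuous_const 4 x))
       (fun x Hx => proj2 (FM_bounds M x ltac:(lra)))).
    rewrite RInt_const, Rscal_eqR in H. lra.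
Qed.

Lemma main_lim : is_series (fun m => hh (S m) * J m) (3 * ln 2 - 1).
Proof.
  cut (is_lim_seq (sum_n (fun m => hh (S m) * J m)) (3 * ln 2 - 1)). { intros H; exact H. }
  apply is_lim_seq_spec. intros eps. set (L := 3 * ln 2 - 1).
  assert (Heps := cond_pos eps). set (ep := pos eps) in *.
  destruct (g1_cont (ep / 40) ltac:(lra)) as [d1 [Hd1 Hg1]].
  destruct (g0_cont (ep / 10) ltac:(lra)) as [d2 [Hd2 Hg0]].
  destruct (h1_cont (ep / 40) ltac:(lra)) as [d3 [Hd3 Hh1]].
  destruct (G2_cont (ep / 10) ltac:(lra)) as [d4 [Hd4 HG2]].
  assert (HPI := PI_RGT_0).
  set (m1 := Rmin (Rmin d1 d2) (Rmin (ep / 40) (PI / 4))).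
  set (m2 := Rmin (Rmin d3 d4) (Rmin (ep / 40) (PI / 4))).
  assert (Hm1 : 0 < m1 /\ m1 <= d1 /\ m1 <= d2 /\ m1 <= ep / 40 /\ m1 <= PI / 4).
  { unfold m1. repeat split.
    apply Rmin_glb_lt; apply Rmin_glb_lt; lra.
    eapply Rle_trans; apply Rmin_l.
    eapply Rle_trans. apply Rmin_l. apply Rmin_r.
    eapply Rle_trans. apply Rmin_r. apply Rmin_l.
    eapply Rle_trans; apply Rmin_r. }
  assert (Hm2 : 0 < m2 /\ m2 <= d3 /\ m2 <= d4 /\ m2 <= ep / 40 /\ m2 <= PI / 4).
  { unfold m2. repeat split.
    apply Rmin_glb_lt; apply Rmin_glb_lt; lra.
    eapply Rle_trans; apply Rmin_l.
    eapply Rle_trans. apply Rmin_l. apply Rmin_r.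
    eapply Rle_trans. apply Rmin_r. apply Rmin_l.
    eapply Rle_trans; apply Rmin_r. }
  set (e := m1 / 2). set (b := PI / 2 - m2 / 2).
  assert (He : 0 < e < b) by (unfold e, b; lra).
  assert (Hb : b < PI / 2) by (unfold b; lra).
  set (Kb := fcl b / cos b ^ 2).
  assert (Hw := w_series b ltac:(lra)). fold Kb in Hw.
  assert (Hw' : is_lim_seq (sum_n (w b)) Kb) by exact Hw.
  apply is_lim_seq_spec in Hw'.
  destruct (Hw' (mkposreal (ep / 10) ltac:(lra))) as [N HN].
  exists N. intros M HM. specialize (HN M HM). simpl in HN.
  rewrite T_int.
  assert (ex_fcl : ex_RInt fcl e b).
  { apply (@ex_RInt_continuous R_CompleteNormedModule). intros z Hz.
    rewrite Rmin_left, Rmax_right in Hz by lra. apply fcl_cont. lra. }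
  assert (ex_d : ex_RInt (fun t => FM M t - fcl t) e b).
  { apply (@ex_RInt_continuous R_CompleteNormedModule). intros z Hz.
    rewrite Rmin_left, Rmax_right in Hz by lra.
    apply (@continuous_minus R_UniformSpace R_AbsRing R_NormedModule). apply FM_cont. apply fcl_cont. lra. }
  rewrite <- (RInt_Chasles_R (FM M) 0 e (PI / 2)) by apply ex_RInt_FM.
  rewrite <- (RInt_Chasles_R (FM M) e b (PI / 2)) by apply ex_RInt_FM.
  assert (Ed : RInt (fun t => FM M t - fcl t) e b = RInt (FM M) e b - RInt fcl e b)
    by (apply RInt_minus_R; [apply ex_RInt_FM | exact ex_fcl]).
  rewrite RInt_fcl in Ed by lra.
  assert (HA := RInt_FM_bounds M 0 e ltac:(lra) ltac:(lra)).
  assert (HC := RInt_FM_bounds M b (PI / 2) ltac:(lra) ltac:(lra)).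
  assert (HE : Rabs (RInt (fun t => FM M t - fcl t) e b) <= (b - e) * (Kb - sum_n (w b) M)).
  { apply abs_RInt_le_const. lra. exact ex_d. intros t Ht.
    destruct (tail_bound t b M ltac:(lra) Hb) as [T1 T2].
    rewrite Rabs_minus_sym, Rabs_pos_eq by lra. fold Kb in T2. lra. }
  assert (HB : Rabs (V e) < ep / 5).
  { eapply Rle_lt_trans. apply V_small. lra.
    assert (X1 := Hg1 e ltac:(rewrite Rabs_pos_eq; unfold e; lra)).
    assert (X2 := Hg0 e ltac:(rewrite Rabs_pos_eq; unfold e; lra)).
    unfold g1 in X1. assert (X3 := Rle_abs (sin e / cos e)). lra. }
  assert (HD : Rabs (V b - L) < ep / 5).
  { eapply Rle_lt_trans. apply V_near. lra.
    assert (Y : Rabs (b - PI / 2) = m2 / 2).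
    { unfold b. replace (PI / 2 - m2 / 2 - PI / 2) with (- (m2 / 2)) by ring.
      rewrite Rabs_Ropp, Rabs_pos_eq; lra. }
    assert (X1 := Hh1 b ltac:(rewrite Y; lra)).
    assert (X2 := HG2 b ltac:(rewrite Y; lra)).
    unfold h1 in X1. assert (X3 := Rle_abs (cos b / sin b)). unfold L. lra. }
  assert (HK : 0 <= Kb - sum_n (w b) M).
  { destruct (tail_bound b b M ltac:(lra) Hb) as [T1 T2]. fold Kb in T2. lra. }
  assert (HK2 : Kb - sum_n (w b) M < ep / 10).
  { apply Rabs_def2 in HN. lra. }
  assert (HPI2 := PI2_3_2). assert (HPI4 := PI_4).
  assert (HE2 : (b - e) * (Kb - sum_n (w b) M) <= 2 * (Kb - sum_n (w b) M)).
  { apply Rmult_le_compat_r. exact HK. lra. }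
  apply abs_le_split in HE. apply Rabs_def2 in HB. apply Rabs_def2 in HD.
  assert (He2 : e <= ep / 80) by (unfold e; lra).
  assert (Hb2 : PI / 2 - b <= ep / 80) by (unfold b; lra).
  apply Rabs_def1.
  - rewrite Ed in HE. lra.
  - rewrite Ed in HE. lra.
Qed.


Lemma term_S m : (Binomial.C (2 * S m) (S m)) ^ 2 * harmonic (2 * S m) / (16 ^ S m * (2 * INR (S m) - 1))
   = 2 / PI * (hh (S m) * J m).
Proof.
  rewrite J_val. unfold hh.
  assert (H4 : 4 ^ S m <> 0) by (apply pow_nonzero; lra).
  assert (EC : Binomial.C (2 * S m) (S m) = aa (S m) * 4 ^ (S m)) by (unfold aa; field; exact H4).
  rewrite EC. replace (16 ^ S m) with (4 ^ S m * 4 ^ S m) by (rewrite <- Rpow_mult_distr; f_equal; lra).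
  rewrite aa_S. rewrite S_INR. assert (0 <= INR m) by apply pos_INR.
  assert (HPI := PI_RGT_0). field. repeat split; lra.
Qed.

Theorem mainTheorem9 :
  is_series
    (fun n : nat =>
       (Binomial.C (2 * n) n) ^ 2 * harmonic (2 * n)
       / (16 ^ n * (2 * INR n - 1)))
    ((6 * ln 2 - 2) / PI).
Proof.
  apply (@is_series_decr_1 R_AbsRing R_NormedModule).
  assert (E0 : (Binomial.C (2 * 0) 0) ^ 2 * harmonic (2 * 0) / (16 ^ 0 * (2 * INR 0 - 1)) = 0).
  { simpl. field. }
  change (is_series (fun k => (Binomial.C (2 * S k) (S k)) ^ 2 * harmonic (2 * S k) / (16 ^ S k * (2 * INR (S k) - 1)))
     ((6 * ln 2 - 2) / PI - (Binomial.C (2 * 0) 0) ^ 2 * harmonic (2 * 0) / (16 ^ 0 * (2 * INR 0 - 1)))).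
  rewrite E0.
  eapply is_series_ext_R. intros n. symmetry. apply term_S.
  replace ((6 * ln 2 - 2) / PI - 0) with (2 / PI * (3 * ln 2 - 1)).
  apply is_series_scal_R. apply main_lim.
  assert (HPI := PI_RGT_0). field. lra.
Qed.
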